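(* Let $\Omega\subset\mathbb{R}^n$ be a convex body. For any $\varepsilon\in[0,\mathrm{In}(\Omega)]$, $$\mathrm{vol}(L_\varepsilon(\Omega))\le g(\varepsilon):=\mathrm{vol}(\Omega)\left(1-\Big(1-\frac{\varepsilon}{\mathrm{In}(\Omega)}\Big)^{n}\right).$$
   Context: A convex body is a convex, closed subset of $\mathbb{R}^n$ with non-empty interior. $\mathrm{vol}$ is $n$-dimensional Lebesgue measure. $\mathrm{In}(\Omega)$ is the inradius of $\Omega$: the radius of the largest ball contained in $\Omega$. The $\varepsilon$-inner neighbourhood is $L_\varepsilon(\Omega)=\{x\in\Omega:\|x-y\|\le\varepsilon\text{ for some }y\in\partial\Omega\}$. *)

(* Defs.v *)
From HB Require Import structures.
From mathcomp Require Import all_boot all_order all_algebra.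
From mathcomp Require Import all_classical all_reals all_analysis.
Set Implicit Arguments. Unset Strict Implicit. Unset Printing Implicit Defensive.
Import Order.TTheory GRing.Theory Num.Theory.
Import numFieldNormedType.Exports.
Local Open Scope classical_set_scope.
Local Open Scope ring_scope.

Section Defs.
Variables (R : realType) (n : nat).
Local Notation V := 'rV[R]_n.

(** Euclidean norm on R^n (the default norm on 'rV in MathComp is the sup norm). *)
Definition enorm (x : V) : R := Num.sqrt (\sum_(i < n) (x ord0 i) ^+ 2).

Definition eball (c : V) (r : R) : set V := [set x | enorm (x - c) <= r].

(** Convex body: convex, closed, non-empty interior
    (topology of 'rV = product topology = Euclidean topology). *)
Definition convex_body (O : set V) : Prop :=
  [/\ @convex_set R V O, closed O & interior O !=set0].

Definition bd (O : set V) : set V := closure O `\` interior O.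

(** Inradius, as an extended real (possibly +oo for unbounded bodies). *)
Definition inradius (O : set V) : \bar R :=
  ereal_sup [set r%:E | r in [set r : R | 0 <= r /\ exists c, eball c r `<=` O]].

Definition inner_nbhd (eps : R) (O : set V) : set V :=
  [set x | O x /\ exists2 y, bd O y & enorm (x - y) <= eps].

Definition box (a b : V) : set V := [set x | forall i, a ord0 i <= x ord0 i <= b ord0 i].
Definition box_vol (a b : V) : R := \prod_(i < n) (b ord0 i - a ord0 i).

(** n-dimensional Lebesgue (outer) measure: infimum of the total volume of
    countable covers by boxes.  It coincides with Lebesgue measure on
    Lebesgue-measurable (in particular closed) sets. *)
Definition vol (A : set V) : \bar R :=
  ereal_inf [set s : \bar R | exists a b : nat -> V,
     [/\ forall k i, a k ord0 i <= b k ord0 i,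
         A `<=` \bigcup_k box (a k) (b k) &
         s = (\sum_(0 <= k <oo) (box_vol (a k) (b k))%:E)%E]].
End Defs.

(* Main.v *)
Require Import Defs.
From HB Require Import structures.
From mathcomp Require Import all_boot all_order all_algebra.
From mathcomp Require Import all_classical all_reals all_analysis.
From mathcomp Require Import ring lra.
Import Order.TTheory GRing.Theory Num.Theory.
Import numFieldNormedType.Exports.
Local Open Scope classical_set_scope.
Local Open Scope ring_scope.
Local Open Scope convex_scope.
Set Implicit Arguments. Unset Strict Implicit. Unset Printing Implicit Defensive.
Section Enorm.
Variables (R : realType) (n : nat).
Local Notation V := 'rV[R]_n.
Implicit Types x y z : V.

Lemma sumsq_ge0 x : 0 <= \sum_(i < n) (x ord0 i) ^+ 2.
Proof. by apply: sumr_ge0 => i _; exact: sqr_ge0. Qed.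

Lemma enorm_ge0 x : 0 <= enorm x.
Proof. exact: sqrtr_ge0. Qed.

Lemma enorm_sqr x : enorm x ^+ 2 = \sum_(i < n) (x ord0 i) ^+ 2.
Proof. by rewrite /enorm sqr_sqrtr // sumsq_ge0. Qed.

Lemma coord_le_enorm x i : `|x ord0 i| <= enorm x.
Proof.
rewrite -sqrtr_sqr /enorm ler_sqrt ?sqr_ge0 //.
rewrite (bigD1 i) //= lerDl; apply: sumr_ge0 => j _; exact: sqr_ge0.
exact: sumsq_ge0.
Qed.

Lemma enorm_le_sum x : enorm x <= \sum_(i < n) `|x ord0 i|.
Proof.
have S0 : 0 <= \sum_(i < n) `|x ord0 i| by apply: sumr_ge0.
rewrite -(ger0_norm S0) -sqrtr_sqr /enorm ler_sqrt ?sqr_ge0 //.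
rewrite expr2 mulr_suml; apply: ler_sum => i _.
rewrite -real_normK ?num_real // expr2 ler_wpM2l //.
by rewrite (bigD1 i) //= lerDl; apply: sumr_ge0.
Qed.

Lemma enormZ (k : R) x : enorm (k *: x) = `|k| * enorm x.
Proof.
rewrite /enorm (eq_bigr (fun i => k ^+ 2 * (x ord0 i) ^+ 2)); last first.
  by move=> i _; rewrite mxE exprMn.
by rewrite -mulr_sumr sqrtrM ?sqr_ge0 // sqrtr_sqr.
Qed.

Lemma enormN x : enorm (- x) = enorm x.
Proof. by rewrite -scaleN1r enormZ normrN normr1 mul1r. Qed.

Lemma enormB x y : enorm (x - y) = enorm (y - x).
Proof. by rewrite -enormN opprB. Qed.

Lemma enorm_eq0_coord {x} : enorm x = 0 -> forall i, x ord0 i = 0.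
Proof.
move=> h i; have := coord_le_enorm x i; rewrite h.
by rewrite normr_le0 => /eqP.
Qed.

Lemma cauchy_schwarz x y :
  \sum_(i < n) x ord0 i * y ord0 i <= enorm x * enorm y.
Proof.
have [a0|a0] := eqVneq (enorm x) 0.
  rewrite a0 mul0r big1 // => i _; by rewrite (enorm_eq0_coord a0 i) mul0r.
have [b0|b0] := eqVneq (enorm y) 0.
  rewrite b0 mulr0 big1 // => i _; by rewrite (enorm_eq0_coord b0 i) mulr0.
set a := enorm x; set b := enorm y; set S := \sum_(i < n) _.
have apos : 0 < a by rewrite lt_neqAle eq_sym a0 enorm_ge0.
have bpos : 0 < b by rewrite lt_neqAle eq_sym b0 enorm_ge0.
have H : 0 <= \sum_(i < n) (b * x ord0 i - a * y ord0 i) ^+ 2.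
  by apply: sumr_ge0 => i _; exact: sqr_ge0.
have E : \sum_(i < n) (b * x ord0 i - a * y ord0 i) ^+ 2 =
   b ^+ 2 * (\sum_(i < n) (x ord0 i) ^+ 2) - 2 * a * b * S
   + a ^+ 2 * (\sum_(i < n) (y ord0 i) ^+ 2).
  rewrite /S !mulr_sumr -sumrN -!big_split /=.
  apply: eq_bigr => i _; ring.
rewrite E -!enorm_sqr -/a -/b in H.
have ab : 0 < a * b by rewrite mulr_gt0.
nra.
Qed.

Lemma enormD x y : enorm (x + y) <= enorm x + enorm y.
Proof.
have S0 : 0 <= enorm x + enorm y by rewrite addr_ge0 ?enorm_ge0.
rewrite -(ger0_norm S0) -sqrtr_sqr /enorm ler_sqrt ?sqr_ge0 //.
rewrite -/(enorm x) -/(enorm y).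
have -> : \sum_(i < n) ((x + y) ord0 i) ^+ 2 =
   enorm x ^+ 2 + 2 * \sum_(i < n) x ord0 i * y ord0 i + enorm y ^+ 2.
  rewrite !enorm_sqr mulr_sumr -!big_split /=; apply: eq_bigr => i _.
  rewrite mxE; ring.
have := cauchy_schwarz x y; nra.
Qed.

Lemma enorm_tri x y z : enorm (x - z) <= enorm (x - y) + enorm (y - z).
Proof. by have := enormD (x - y) (y - z); rewrite addrA subrK. Qed.

End Enorm.
Section Geom.
Variables (R : realType) (n : nat).
Local Notation V := 'rV[R]_n.
Implicit Types x y z : V.

Lemma ball_coordP x y (e : R) :
  ball x e y <-> (0 < e /\ forall i, `|x ord0 i - y ord0 i| < e).
Proof.
split.
- move=> [e0 H]; split => // i. have := H ord0 i. by rewrite /ball /=.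
- move=> [e0 H]; split => // i j. rewrite (ord1 i). exact: H.
Qed.

Lemma conv_mem (E : set V) x y (t : R) : @convex_set R V E -> E x -> E y ->
  0 <= t -> t <= 1 -> E (t *: x + (1 - t) *: y).
Proof.
move=> cE Ex Ey t0 t1.
have := cE x y (Itv01 t0 t1) (mem_set Ex) (mem_set Ey).
by rewrite inE.
Qed.

Lemma eball_shrink (E : set V) c (r mu : R) x :
  @convex_set R V E -> eball c r `<=` E -> E x -> 0 <= mu -> mu < 1 ->
  eball (mu *: x + (1 - mu) *: c) ((1 - mu) * r) `<=` E.
Proof.
move=> cE cr Ex mu0 mu1 p; rewrite /eball /= => hp.
set y := mu *: x + (1 - mu) *: c in hp *.
have m0 : 0 < 1 - mu by rewrite subr_gt0.
set q := c + (1 - mu)^-1 *: (p - y).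
have Eq : E q.
  apply: cr; rewrite /eball /= /q [c + _]addrC addrK enormZ.
  rewrite ger0_norm ?invr_ge0 ?(ltW m0) //.
  by rewrite ler_pdivrMl.
have -> : p = mu *: x + (1 - mu) *: q.
  rewrite /q scalerDr scalerA mulfV ?gt_eqF // scale1r.
  by rewrite addrA -/y addrC subrK.
exact: (conv_mem cE Ex Eq mu0 (ltW mu1)).
Qed.
End Geom.
Section Geom2.
Variables (R : realType) (n : nat).
Local Notation V := 'rV[R]_n.
Implicit Types x y z : V.

Lemma enorm_le_coord x (e : R) : (forall i, `|x ord0 i| <= e) -> enorm x <= e *+ n.
Proof.
move=> h; apply: (le_trans (enorm_le_sum x)).
rewrite -[n in e *+ n]card_ord -sumr_const.
by apply: ler_sum => i _.
Qed.

Lemma eball_interior (E : set V) y (s : R) w :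
  eball y s `<=` E -> enorm (w - y) < s -> interior E w.
Proof.
move=> hE hw; rewrite /interior; apply/nbhs_ballP.
set d := s - enorm (w - y).
have d0 : 0 < d by rewrite subr_gt0.
exists (d / (n.+1)%:R); first by rewrite /= divr_gt0.
move=> v /ball_coordP [_ hv]; apply: hE; rewrite /eball /=.
have h1 : enorm (v - w) <= (d / (n.+1)%:R) *+ n.
  apply: enorm_le_coord => i; rewrite !mxE distrC; apply: ltW; exact: hv i.
have h2 : (d / (n.+1)%:R) *+ n < d.
  by rewrite -mulr_natr mulrAC ltr_pdivrMr ?ltr0Sn // ltr_pM2l // ltr_nat.
apply: (le_trans (enorm_tri v w y)); rewrite -(subrK (enorm (w - y)) s) lerD2r.
by apply: ltW; apply: le_lt_trans h1 h2.
Qed.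

Lemma interior_eball (O : set V) w : interior O w ->
  exists2 t : R, 0 < t & eball w t `<=` O.
Proof.
rewrite /interior => /nbhs_ballP [e e0 he].
exists (e / 2); first by rewrite divr_gt0.
move=> v; rewrite /eball /= => hv; apply: he; apply/ball_coordP; split => // i.
rewrite -[w ord0 i - v ord0 i]opprB normrN.
have : `|(v - w) ord0 i| <= e / 2 by apply: le_trans (coord_le_enorm _ _) hv.
rewrite !mxE => h; apply: le_lt_trans h _.
by rewrite ltr_pdivrMr // ltr_pMr // ltr1n.
Qed.

End Geom2.
Section Vol.
Variables (R : realType) (n : nat).
Local Notation V := 'rV[R]_n.
Local Open Scope ereal_scope.

Lemma box_vol_ge0 (a b : V) : (forall i, (a ord0 i <= b ord0 i)%R) ->
  (0 <= box_vol a b)%R.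
Proof. by move=> h; apply: prodr_ge0 => i _; rewrite subr_ge0. Qed.

Lemma vol_le_cover (A : set V) (a b : nat -> V) :
  (forall k i, (a k ord0 i <= b k ord0 i)%R) ->
  A `<=` \bigcup_k box (a k) (b k) ->
  vol A <= \sum_(0 <= k <oo) (box_vol (a k) (b k))%:E.
Proof. by move=> h1 h2; apply: ereal_inf_lbound; exists a, b; split. Qed.

Lemma vol_ge0 (A : set V) : 0 <= vol A.
Proof.
apply: le_ereal_inf_tmp => s [a [b [h1 h2 ->]]].
by apply: nneseries_ge0 => k _; rewrite lee_fin box_vol_ge0.
Qed.

Lemma vol_mono (A B : set V) : A `<=` B -> vol A <= vol B.
Proof.
move=> AB; apply: le_ereal_inf => s [a [b [h1 h2 ->]]].
by exists a, b; split => //; apply: subset_trans h2.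
Qed.

Lemma vol_sub (A : set V) (F : nat -> set V) :
  A `<=` \bigcup_j F j -> vol A <= \sum_(0 <= j <oo) vol (F j).
Proof.
move=> AF.
have [[i ioo]|] := pselect (exists i, vol (F i) = +oo).
  rewrite (eseries_pinfty _ _ ioo) ?leey// => k _.
  by rewrite -ltNye (lt_le_trans _ (vol_ge0 _)).
rewrite -forallNE => Foo.
apply/lee_addgt0Pr => e e0.
rewrite (le_trans _ (epsilon_trick _ _ _))//; last 2 first.
  by move=> k; exact: vol_ge0.
  exact: ltW.
pose P j (ab : (nat -> V) * (nat -> V)) :=
  [/\ forall k i, (ab.1 k ord0 i <= ab.2 k ord0 i)%R,
      F j `<=` \bigcup_k box (ab.1 k) (ab.2 k) &
      \sum_(0 <= k <oo) (box_vol (ab.1 k) (ab.2 k))%:E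
         <= vol (F j) + (e / (2 ^ j.+1)%:R)%:E].
have [G PG] : {G : nat -> (nat -> V) * (nat -> V) & forall j, P j (G j)}.
  apply: (@choice _ _ P) => j.
  have en1 : (0 < e / (2 ^ j.+1)%:R)%R by rewrite divr_gt0.
  have fin : vol (F j) \is a fin_num.
    rewrite ge0_fin_numE ?vol_ge0 //; rewrite ltey; exact/eqP/Foo.
  have [x [a [b [h1 h2 ->]]] xlt] := lb_ereal_inf_adherent en1 fin.
  by exists (a, b); split => //; exact: ltW.
pose g (p : nat * nat) : \bar R :=
  (box_vol ((G p.1).1 p.2) ((G p.1).2 p.2))%:E.
have g0 p : 0 <= g p.
  by rewrite lee_fin box_vol_ge0 // => i; case: (PG p.1) => + _ _; apply.
apply: (@le_trans _ _ (\esum_(p in setT) g p)).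
  have /card_esym/ppcard_eqP[f] := card_nat2.
  apply: (@le_trans _ _ (\sum_(0 <= k <oo) g (f k))).
    apply: vol_le_cover.
      by move=> k i; case: (PG (f k).1) => + _ _; apply.
    move=> t /AF [j _ Fjt]; case: (PG j) => _ /(_ t Fjt) [k _ hk] _.
    exists (f^-1%FUN (j, k)) => //=.
    by rewrite invK ?inE.
  rewrite -(esum_pred_image g _ xpredT) ?[fun=> _]set_true//.
  by rewrite image_eq.
rewrite (_ : esum _ _ = \sum_(0 <= i <oo) \sum_(0 <= j <oo) g (i, j)); last first.
  pose J : nat -> set (nat * nat) := fun i => [set (i, j) | j in setT].
  rewrite (_ : setT = \bigcup_k J k); last first.
    by rewrite predeqE => -[a b]; split => // _; exists a => //; exists b.
  rewrite esum_bigcupT /=; last 2 first.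
    - apply/trivIsetP => i j _ _ ij.
      rewrite predeqE => -[k m] /=; split => //= -[] [_] _ [<-{k} _].
      by move=> [m' _] [] /esym/eqP; rewrite (negbTE ij).
    - by [].
  rewrite -(image_id [set: nat]) -fun_true esum_pred_image//; last first.
    by move=> k _; exact: esum_ge0.
  apply: eq_eseriesr => /= j _.
  rewrite -(esum_pred_image g (pair j) predT)//=; last first.
    by move=> ? ? _ _; exact: (@can_inj _ _ _ snd).
  by congr esum; rewrite predeqE => -[a b]; split; move=> [i _ <-]; exists i.
apply: lee_nneseries.
  by move=> i _ _; apply: nneseries_ge0 => k _.
by move=> j _; case: (PG j) => _ _.
Qed.

End Vol.
Section Vol2.
Variables (R : realType) (n : nat).
Local Notation V := 'rV[R]_n.
Local Open Scope ereal_scope.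

Lemma vol_scale (A : set V) (mu : R) (c : V) : (0 < mu)%R ->
  (mu ^+ n)%:E * vol A <= vol [set (mu *: x + (1 - mu) *: c)%R | x in A].
Proof.
move=> mu0; apply: le_ereal_inf_tmp => s [a [b [h1 h2 ->]]].
pose a' k : V := mu^-1 *: (a k - (1 - mu) *: c).
pose b' k : V := mu^-1 *: (b k - (1 - mu) *: c).
have ha' k i : a' k ord0 i = (mu^-1 * (a k ord0 i - (1 - mu) * c ord0 i))%R.
  by rewrite !mxE.
have hb' k i : b' k ord0 i = (mu^-1 * (b k ord0 i - (1 - mu) * c ord0 i))%R.
  by rewrite !mxE.
have H : vol A <= \sum_(0 <= k <oo) (box_vol (a' k) (b' k))%:E.
  apply: vol_le_cover.
    move=> k i; rewrite ha' hb' ler_pM2l ?invr_gt0 // lerD2r; exact: h1.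
  move=> x Ax.
  have [k _ hk] := h2 _ (ex_intro2 _ _ x Ax erefl).
  exists k => // i; rewrite ha' hb'.
  have := hk i; rewrite !mxE => /andP [l1 l2].
  rewrite ler_pdivrMl // ler_pdivlMl //; apply/andP; split; lra.
have E k : box_vol (a' k) (b' k) = (mu^-1 ^+ n * box_vol (a k) (b k))%R.
  rewrite /box_vol -[in (mu^-1 ^+ n)%R](card_ord n) -prodr_const -big_split /=.
  by apply: eq_bigr => i _; rewrite ha' hb'; ring.
move: H; under eq_eseriesr do rewrite E EFinM.
rewrite nneseriesZl; last by move=> k _; rewrite lee_fin box_vol_ge0.
move=> H.
have mn0 : (0 <= mu ^+ n)%R by rewrite exprn_ge0 ?ltW.
apply: (le_trans (lee_wpmul2l _ H)); first by rewrite lee_fin.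
rewrite muleA -EFinM -exprMn mulfV ?gt_eqF // expr1n mul1e //.
Qed.

End Vol2.
Section Vol3.
Variables (R : realType) (n : nat).
Hypothesis n0 : (0 < n)%N.
Local Notation V := 'rV[R]_n.

Lemma box_vol00 : box_vol (0 : V) 0 = 0.
Proof. by rewrite /box_vol (bigD1 (Ordinal n0)) //= !mxE subrr mul0r. Qed.

Lemma box_split (A B : set V) (a b : V) (d : R) : 0 < d ->
  (forall i, a ord0 i <= b ord0 i) ->
  (forall x y, A x -> B y -> exists i, d <= `|x ord0 i - y ord0 i|) ->
  (vol (A `&` box a b) + vol (B `&` box a b) <= (box_vol a b)%:E)%E.
Proof.
move=> d0 ab sep.
pose L i := b ord0 i - a ord0 i.
have L0 i : 0 <= L i by rewrite subr_ge0.
pose k' := Num.trunc ((\sum_i L i) / d).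
pose K := k'.+1.
have Kpos : 0 < K%:R :> R by rewrite ltr0Sn.
pose s i := L i / K%:R.
have s0 i : 0 <= s i by rewrite divr_ge0 // ltW.
have sd i : s i < d.
  have h1 : (\sum_i L i) / d < K%:R.
    have := @truncn_itv R ((\sum_i L i) / d).
    by rewrite divr_ge0 ?sumr_ge0 ?(ltW d0) // => /(_ isT) /andP [].
  have h2 : L i <= \sum_i L i by rewrite (bigD1 i) //= lerDl sumr_ge0.
  rewrite /s ltr_pdivrMr //; rewrite ltr_pdivrMr // in h1.
  rewrite mulrC; exact: le_lt_trans h2 h1.
pose T := {ffun 'I_n -> 'I_K}.
pose lo (t : T) : V := \row_i (a ord0 i + (t i)%:R * s i).
pose hi (t : T) : V := \row_i (a ord0 i + (t i).+1%:R * s i).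
have lohi t i : lo t ord0 i <= hi t ord0 i.
  by rewrite !mxE lerD2l ler_wpM2r // ler_nat.
pose w := \prod_i s i.
have volsub t : box_vol (lo t) (hi t) = w.
  by rewrite /box_vol /w; apply: eq_bigr => i _; rewrite !mxE -natr1; ring.
pose t0 : T := [ffun=> ord0].
pose es := enum T.
pose N := size es.
pose meets (C : set V) (t : T) := `[< exists x, C x /\ box (lo t) (hi t) x >].
pose cnd C k := ((k < N)%N && meets C (nth t0 es k)).
pose ca (C : set V) k : V := if cnd C k then lo (nth t0 es k) else 0.
pose cb (C : set V) k : V := if cnd C k then hi (nth t0 es k) else 0.
pose f C k := box_vol (ca C k) (cb C k).
have cab C k i : ca C k ord0 i <= cb C k ord0 i.
  by rewrite /ca /cb; case: ifP => _ //; rewrite mxE.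
have fE C k : f C k = if cnd C k then w else 0.
  by rewrite /f /ca /cb; case: ifP => _; rewrite ?volsub ?box_vol00.
have cover C : C `&` box a b `<=` \bigcup_k box (ca C k) (cb C k).
  move=> x [Cx bx].
  pose u i := (x ord0 i - a ord0 i) / s i.
  pose m i := minn (Num.trunc (u i)) k'.
  have mK i : (m i < K)%N by rewrite /K ltnS geq_minr.
  pose t : T := [ffun i => inord (m i)].
  have tE i : (t i : nat) = m i by rewrite /t ffunE inordK.
  have xin : box (lo t) (hi t) x.
    move=> i; rewrite !mxE tE.
    have [xa xb] : a ord0 i <= x ord0 i /\ x ord0 i <= b ord0 i.
      by have /andP[] := bx i.
    have [si0|sipos] := eqVneq (s i) 0.
      have Li0 : L i = 0.
        by move/eqP: si0; rewrite /s mulf_eq0 invr_eq0 (gt_eqF Kpos) orbF => /eqP.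
      rewrite si0 !mulr0 !addr0; apply/andP; split => //.
      by move: Li0; rewrite /L => /eqP; rewrite subr_eq0 => /eqP <-.
    have spos : 0 < s i by rewrite lt_neqAle eq_sym sipos s0.
    have u0 : 0 <= u i by rewrite /u divr_ge0 // subr_ge0.
    have xE : x ord0 i = a ord0 i + u i * s i.
      by rewrite /u mulfVK ?gt_eqF // addrC subrK.
    have mu : (m i)%:R <= u i.
      apply: (@le_trans _ _ (Num.trunc (u i))%:R); first by rewrite ler_nat geq_minl.
      by rewrite truncn_le.
    have um : u i <= (m i).+1%:R.
      rewrite /m /minn; case: ltnP => h.
        by have /andP [_ /ltW] := truncn_itv u0.
      rewrite /u ler_pdivrMr // /s mulrA mulrC mulrA mulVf ?gt_eqF // mul1r.
      rewrite /L lerD2r //.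
    rewrite xE lerD2l ler_wpM2r //= lerD2l ler_wpM2r //.
  have tin : t \in es by rewrite /es mem_enum.
  exists (index t es) => //.
  have hc : cnd C (index t es).
    rewrite /cnd index_mem tin /= nth_index //; apply/asboolP.
    by exists x.
  by rewrite /ca /cb hc nth_index.
have volC C : (vol (C `&` box a b) <= (\sum_(0 <= k < N) f C k)%:E)%E.
  apply: (le_trans (vol_le_cover (cab C) (cover C))).
  rewrite (nneseries_split 0 N); last by move=> k _; rewrite lee_fin box_vol_ge0.
  rewrite add0n eseries0 ?adde0 ?sumEFin //.
  move=> k kN _; rewrite -/(f C k) fE /cnd.
  by rewrite ltnNge kN.
have fAB k : f A k + f B k <= w.
  have w0 : 0 <= w by apply: prodr_ge0.
  rewrite !fE; case hA: (cnd A k); case hB: (cnd B k); rewrite ?addr0 ?add0r //.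
  exfalso; move: hA hB; rewrite /cnd => /andP [_ /asboolP [x [Ax bx]]].
  move=> /andP [_ /asboolP [y [By by']]].
  have [i hi'] := sep x y Ax By.
  have := bx i; have := by' i; rewrite !mxE => /andP [y1 y2] /andP [x1 x2].
  have := sd i; have : `|x ord0 i - y ord0 i| <= s i.
    rewrite ler_norml; apply/andP; split.
      rewrite -[s i](addrK (a ord0 i)) -!(addrC (a ord0 i)).
      move: x1 y2; rewrite -natr1; lra.
    move: x2 y1; rewrite -natr1; lra.
  lra.
have sumw : \sum_(0 <= k < N) w = box_vol a b.
  rewrite sumr_const_nat subn0 /N -cardE card_ffun !card_ord /w /s.
  rewrite /box_vol prodf_div prodr_const card_ord -natrX.
  by rewrite -(mulr_natr (\prod_i L i / (K ^ n)%:R)) mulfVK // pnatr_eq0 expn_eq0.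
apply: (le_trans (leeD (volC A) (volC B))).
rewrite -EFinD -big_split /= lee_fin -sumw.
by apply: ler_sum_nat => k _; exact: fAB.
Qed.

End Vol3.
Section Vol4.
Variables (R : realType) (n : nat).
Hypothesis n0 : (0 < n)%N.
Local Notation V := 'rV[R]_n.
Local Open Scope ereal_scope.

Lemma vol_sep (A B : set V) (d : R) : (0 < d)%R ->
  (forall x y, A x -> B y -> exists i, (d <= `|x ord0 i - y ord0 i|)%R) ->
  vol A + vol B <= vol (A `|` B).
Proof.
move=> d0 sep; apply: le_ereal_inf_tmp => s [a [b [h1 h2 ->]]].
have sub C : C `<=` A `|` B ->
    vol C <= \sum_(0 <= k <oo) vol (C `&` box (a k) (b k)).
  move=> CAB; apply: vol_sub => x Cx.
  by have [k _ hk] := h2 x (CAB x Cx); exists k.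
apply: le_trans (leeD (sub A (@subsetUl _ A B)) (sub B (@subsetUr _ A B))) _.
rewrite -nneseriesD; last 2 first.
  by move=> k _ _; exact: vol_ge0.
  by move=> k _ _; exact: vol_ge0.
apply: lee_nneseries.
  by move=> k _ _; rewrite adde_ge0 ?vol_ge0.
by move=> k _; apply: (box_split n0 d0 (h1 k) sep).
Qed.

End Vol4.
Section Core.
Variables (R : realType) (n : nat).
Hypothesis n0 : (0 < n)%N.
Local Notation V := 'rV[R]_n.

Lemma core (E : set V) (c : V) (r eps mu : R) : @convex_set R V E ->
  eball c r `<=` E -> 0 < r -> 0 <= eps -> 0 < mu -> mu < 1 - eps / r ->
  (vol (inner_nbhd eps E) + (mu ^+ n)%:E * vol E <= vol E)%E.
Proof.
move=> cE cr r0 eps0 mu0 mur.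
have er : 0 <= eps / r by rewrite divr_ge0 // ltW.
have mu1 : mu < 1 by lra.
have Ec : E c by apply: cr; rewrite /eball /= subrr -(scale0r (0 : V)) enormZ normr0 mul0r ltW.
pose A := [set (mu *: x + (1 - mu) *: c) | x in E].
pose B := inner_nbhd eps E.
have AE : A `<=` E.
  by move=> _ [x Ex <-]; apply: conv_mem => //; rewrite ltW.
have BE : B `<=` E by move=> z [].
pose del := (1 - mu) * r - eps.
have del0 : 0 < del.
  rewrite /del subr_gt0 -(ltr_pdivrMr _ _ r0) //; lra.
pose d := del / (n.+1)%:R.
have d0 : 0 < d by rewrite divr_gt0.
have dn : d *+ n < del.
  by rewrite -mulr_natr mulrAC ltr_pdivrMr ?ltr0Sn // ltr_pM2l // ltr_nat.
have sep : forall y z, A y -> B z -> exists i, d <= `|y ord0 i - z ord0 i|.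
  move=> _ z [x Ex <-] [Ez [w [clw niw] zw]].
  apply: contrapT => /forallNP hall; apply: niw.
  set y := mu *: x + (1 - mu) *: c.
  have hyz : enorm (y - z) <= d *+ n.
    apply: enorm_le_coord => i; rewrite !mxE; apply: ltW.
    rewrite ltNge; apply/negP => h; apply: (hall i); rewrite !mxE; exact: h.
  apply: (eball_interior (eball_shrink cE cr Ex (ltW mu0) mu1)).
  rewrite -/y.
  have h3 := enorm_tri w z y.
  have e1 : enorm (z - y) = enorm (y - z) := enormB _ _.
  have e2 : enorm (w - z) = enorm (z - w) := enormB _ _.
  move: hyz dn; rewrite /del; lra.
apply: (le_trans _ (vol_mono (_ : A `|` B `<=` E))); last first.
  by move=> x [/AE|/BE].
apply: le_trans (vol_sep n0 d0 sep).
rewrite addeC; apply: leeD => //; exact: vol_scale.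
Qed.
End Core.
Section Final.
Variables (R : realType) (n : nat).
Local Notation V := 'rV[R]_n.

Lemma powdiff (a b : R) k : 0 <= b -> b <= a -> a <= 1 ->
  a ^+ k - b ^+ k <= k%:R * (a - b).
Proof.
move=> b0 ba a1; elim: k => [|k IH]; first by rewrite !expr0 subrr mul0r.
have bk0 : 0 <= b ^+ k by rewrite exprn_ge0.
have bk1 : b ^+ k <= 1 by rewrite exprn_ile1 // (le_trans ba).
have abk : b ^+ k <= a ^+ k by rewrite lerXn2r // ?nnegrE // (le_trans b0).
have h1 : 0 <= (1 - a) * (a ^+ k - b ^+ k) by rewrite mulr_ge0 // subr_ge0.
have h2 : 0 <= (a - b) * (1 - b ^+ k) by rewrite mulr_ge0 // subr_ge0.
rewrite !exprS -natr1; nra.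
Qed.

Lemma lim_lemma (x : \bar R) (V0 lam : R) : 0 <= V0 -> 0 < lam -> lam <= 1 ->
  (forall mu, 0 < mu -> mu < lam -> (x + (mu ^+ n * V0)%:E <= V0%:E)%E) ->
  (x <= (V0 * (1 - lam ^+ n))%:E)%E.
Proof.
move=> V00 lam0 lam1 H.
apply/lee_addgt0Pr => e e0.
pose eta := Num.min (lam / 2) (e / (V0 * n%:R + 1)).
have D0 : 0 < V0 * n%:R + 1 by rewrite ltr_pwDr // mulr_ge0.
have eta0 : 0 < eta by rewrite lt_min !divr_gt0.
have eta1 : eta <= lam / 2 by rewrite ge_min lexx.
have eta2 : eta * (V0 * n%:R + 1) <= e.
  by rewrite -ler_pdivlMr // ge_min lexx orbT.
pose mu := lam - eta.
have mu0 : 0 < mu by rewrite /mu; lra.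
have mul : mu < lam by rewrite /mu; lra.
have Hm := H mu mu0 mul; clear H; move: Hm.
have P := powdiff n (ltW mu0) (ltW mul) lam1.
have P2 : V0 * (lam ^+ n - mu ^+ n) <= V0 * (n%:R * (lam - mu)) by rewrite ler_wpM2l.
case: x => [r| |] //=.
  rewrite -EFinD !lee_fin => h.
  have : lam - mu = eta by rewrite /mu; ring.
  move=> E; rewrite E in P2; nra.
by move=> _; rewrite leNye.
Qed.

End Final.
Section Final2.
Variables (R : realType) (n : nat).
Hypothesis n0 : (0 < n)%N.
Local Notation V := 'rV[R]_n.

Lemma vol_box_fin (A : set V) (a b : V) : (forall i, a ord0 i <= b ord0 i) ->
  A `<=` box a b -> (vol A <= (box_vol a b)%:E)%E.
Proof.
move=> ab Ab.
pose ca k : V := if k == 0%N then a else 0.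
pose cb k : V := if k == 0%N then b else 0.
have cab k i : ca k ord0 i <= cb k ord0 i.
  by rewrite /ca /cb; case: ifP => _ //; rewrite mxE.
apply: le_trans (vol_le_cover cab _) _.
  by move=> x Ax; exists 0%N => //; rewrite /ca /cb /=; exact: Ab.
rewrite (nneseries_split 0 1); last by move=> k _; rewrite lee_fin box_vol_ge0.
rewrite add0n eseries0 ?adde0 ?big_nat1 //.
by move=> k k1 _; rewrite /ca /cb; case: eqP => [k0|_]; [rewrite k0 in k1|rewrite box_vol00].
Qed.

Lemma box_convex (a b : V) : @convex_set R V (box a b).
Proof.
move=> x y t /set_mem hx /set_mem hy; apply/mem_set => i.
rewrite /= !mxE.
have /andP [x1 x2] := hx i; have /andP [y1 y2] := hy i.
have t0 : 0 <= t%:num by [].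
have t1 : t%:num <= 1 by [].
rewrite /unstable.onem; apply/andP; split; nra.
Qed.

Lemma convexI (A B : set V) : @convex_set R V A -> @convex_set R V B ->
  @convex_set R V (A `&` B).
Proof.
move=> cA cB x y t /set_mem [xA xB] /set_mem [yA yB]; apply/mem_set; split.
  by apply/set_mem/cA; apply/mem_set.
by apply/set_mem/cB; apply/mem_set.
Qed.

Lemma main_fin (E : set V) (V0 eps lam : R) : @convex_set R V E ->
  vol E = V0%:E -> 0 <= eps -> 0 < lam -> lam <= 1 ->
  (forall mu, 0 < mu -> mu < lam -> exists c r,
      [/\ eball c r `<=` E, 0 < r & mu < 1 - eps / r]) ->
  (vol (inner_nbhd eps E) <= (V0 * (1 - lam ^+ n))%:E)%E.
Proof.
move=> cE vE eps0 lam0 lam1 H.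
have V00 : 0 <= V0 by rewrite -lee_fin -vE vol_ge0.
apply: lim_lemma => // mu mu0 mul.
have [c [r [cr r0 mur]]] := H mu mu0 mul.
have := core n0 cE cr r0 eps0 mu0 mur.
by rewrite vE -EFinM.
Qed.

End Final2.
Section Final3.
Variables (R : realType) (n : nat).
Hypothesis n0 : (0 < n)%N.
Local Notation V := 'rV[R]_n.

Lemma vec_eq_enorm0 (x y : V) : enorm (x - y) <= 0 -> x = y.
Proof.
move=> h; have h0 : enorm (x - y) = 0 by apply/le_anti; rewrite h enorm_ge0.
apply/matrixP => i j; rewrite (ord1 i).
by have := enorm_eq0_coord h0 j; rewrite !mxE => /eqP; rewrite subr_eq0 => /eqP.
Qed.

Lemma coord_le_sum (x : V) i : `|x ord0 i| <= \sum_j `|x ord0 j|.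
Proof. by rewrite (bigD1 i) //= lerDl sumr_ge0. Qed.

Lemma loc0 (O : set V) (w : V) (t : R) : @convex_set R V O ->
  eball w t `<=` O -> 0 < t -> (vol (inner_nbhd 0 O) <= 0)%E.
Proof.
move=> cO wt t0.
pose Kc := (Num.trunc (\sum_i `|w ord0 i| + t)).+1.
have Kcgt : \sum_i `|w ord0 i| + t < Kc%:R.
  by have /andP [] := @truncn_itv R (\sum_i `|w ord0 i| + t) (addr_ge0 (sumr_ge0 _ (fun i _ => normr_ge0 _)) (ltW t0)).
pose cube (j : nat) : set V := box (const_mx (- j%:R)) (const_mx j%:R).
pose Ej j := O `&` cube (j + Kc)%N.
have cubeP j (x : V) : (forall i, `|x ord0 i| <= j%:R) -> cube j x.
  by move=> h i; rewrite !mxE -ler_norml.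
have hw j : eball w t `<=` Ej j.
  move=> x hx; split; first exact: wt.
  apply: cubeP => i.
  have h1 : `|x ord0 i| <= `|w ord0 i| + `|x ord0 i - w ord0 i|.
    by have := ler_normD (w ord0 i) (x ord0 i - w ord0 i); rewrite addrC subrK.
  have h2 : `|x ord0 i - w ord0 i| <= t.
    by have := coord_le_enorm (x - w) i; rewrite !mxE => h; apply: le_trans h hx.
  have h3 := coord_le_sum w i.
  have h4 : (Kc%:R : R) <= (j + Kc)%N%:R by rewrite ler_nat leq_addl.
  lra.
have cE j : @convex_set R V (Ej j) by apply: convexI => //; exact: box_convex.
have volfin j : exists V0 : R, vol (Ej j) = V0%:E.
  exists (fine (vol (Ej j))); rewrite fineK // ge0_fin_numE ?vol_ge0 //.
  have hb : (vol (Ej j) <= (box_vol (const_mx (- (j + Kc)%N%:R) : V)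
                               (const_mx (j + Kc)%N%:R))%:E)%E.
    apply: vol_box_fin => //; last by move=> x [].
    by move=> i; rewrite !mxE; have h := @ler0n R (j + Kc)%N; lra.
  by apply: le_lt_trans hb _; exact: ltry.
have L0 j : vol (inner_nbhd 0 (Ej j)) = 0%E.
  apply/le_anti; rewrite vol_ge0 andbT.
  have [V0 hV] := volfin j.
  have := main_fin n0 (cE j) hV (lexx 0) ltr01 (lexx 1).
  rewrite expr1n subrr mulr0; apply => mu mu0 mu1.
  by exists w, t; split => //; rewrite mul0r subr0.
apply: (le_trans (vol_sub (F := fun j => inner_nbhd 0 (Ej j)) _)).
  move=> z [Oz [y [cly niy] zy]].
  have zyE := vec_eq_enorm0 zy; subst y.
  exists (Num.trunc (\sum_i `|z ord0 i|)) => //.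
  have zc : cube (Num.trunc (\sum_i `|z ord0 i|) + Kc)%N z.
    apply: cubeP => i; apply: (le_trans (coord_le_sum z i)).
    have /andP [_ /ltW h] := @truncn_itv R (\sum_i `|z ord0 i|) (sumr_ge0 _ (fun i _ => normr_ge0 _)).
    apply: le_trans h _; rewrite ler_nat -addn1 leq_add2l.
    by [].
  split; first by split.
  exists z; last by rewrite subrr -(scale0r (0 : V)) enormZ normr0 mul0r.
  split; first by apply: subset_closure.
  by move=> /(interiorS (@subIsetl _ O _)).
by rewrite eseries0 // => j _ _; exact: L0.
Qed.
End Final3.
Section Final4.
Variables (R : realType).

Lemma n0_false (O : set 'rV[R]_0) (rho : R) : O !=set0 ->
  inradius O = rho%:E -> False.
Proof.
move=> [c Oc] hr.
have h : ((`|rho| + 1)%:E <= inradius O)%E.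
  apply: ereal_sup_ubound; exists (`|rho| + 1) => //; split.
    by rewrite addr_ge0.
  exists c => x _.
  have -> : x = c by apply/matrixP => i [j hj].
  exact: Oc.
rewrite hr lee_fin in h; have := ler_norm rho; lra.
Qed.

Lemma main_pos (n : nat) (O : set 'rV[R]_n) (rho eps : R) : (0 < n)%N ->
  convex_body O ->
  inradius O = rho%:E ->
  0 <= eps -> eps <= rho ->
  (vol (inner_nbhd eps O) <= vol O * (1 - (1 - eps / rho) ^+ n)%:E)%E.
Proof.
move=> n0 [cO clO [w Ow]] hr eps0 epsr.
have [t t0 wt] := interior_eball Ow.
have trho : t <= rho.
  rewrite -lee_fin -hr; apply: ereal_sup_ubound; exists t => //; split.
    exact: ltW.
  by exists w.
have rho0 : 0 < rho by apply: lt_le_trans t0 trho.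
have [epsE|epslt] := eqVneq eps rho.
  rewrite epsE divff ?gt_eqF // subrr expr0n eqn0Ngt n0 /= subr0 mule1.
  by apply: vol_mono => x [].
have epsr' : eps < rho by rewrite lt_neqAle epslt epsr.
pose lam := 1 - eps / rho.
have er : eps / rho < 1 by rewrite ltr_pdivrMr // mul1r.
have er0 : 0 <= eps / rho by rewrite divr_ge0 // ltW.
have lam0 : 0 < lam by rewrite /lam subr_gt0.
have lam1 : lam <= 1 by rewrite /lam lerBlDr lerDl.
have Hmu : forall mu, 0 < mu -> mu < lam -> exists c r,
    [/\ eball c r `<=` O, 0 < r & mu < 1 - eps / r].
  move=> mu mu0 mul.
  have m1 : 0 < 1 - mu by rewrite /lam in mul; lra.
  have e1 : eps / (1 - mu) < rho.
    rewrite ltr_pdivrMr //; rewrite /lam in mul.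
    have : eps / rho < 1 - mu by lra.
    by rewrite ltr_pdivrMr // mulrC.
  pose tg := Num.max (eps / (1 - mu)) 0.
  have : (tg%:E < inradius O)%E by rewrite hr lte_fin /tg gt_max e1 rho0.
  move=> /ereal_sup_gt [_ [r [r0 [c cr]] <-]]; rewrite lte_fin /tg gt_max.
  move=> /andP [h1 h2]; exists c, r; split => //.
  have : eps < (1 - mu) * r by rewrite mulrC -ltr_pdivrMr.
  by rewrite -ltr_pdivrMr // => h; lra.
case hV: (vol O) => [V0| |].
- by rewrite -EFinM; apply: main_fin.
- have [eps00|epspos] := eqVneq eps 0.
    rewrite eps00 mul0r subr0 expr1n subrr mule0.
    rewrite eps00 in Hmu *; exact: loc0 wt t0.
  have epsp : 0 < eps by rewrite lt_neqAle eq_sym epspos eps0.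
  have : 0 < eps / rho by rewrite divr_gt0.
  move=> erp; have lamlt : lam < 1 by rewrite /lam; lra.
  rewrite gt0_mulye ?leey // lte_fin subr_gt0 expr_lt1 //; exact: ltW.
- by have := vol_ge0 O; rewrite hV.
Qed.

End Final4.

Unset Implicit Arguments.

Theorem mainTheorem3 (R : realType) (n : nat) (O : set 'rV[R]_n) (rho eps : R) :
  convex_body O ->
  inradius O = rho%:E ->
  0 <= eps -> eps <= rho ->
  (vol (inner_nbhd eps O) <= vol O * (1 - (1 - eps / rho) ^+ n)%:E)%E.
Proof.
case: n O => [|m] O hO hr eps0 epsr.
  by exfalso; case: hO => _ _ [w Ow]; apply: (n0_false (rho := rho)) hr; exists w; exact: interior_subset.
exact: main_pos.
Qed.
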